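(* Let $n\geq 3$ be odd. Then the GFB trees $T_n^{gfb}$ and $T_{n-1}^{gfb}$ have a common maximal pending subtree, and $T_n^{gfb}$ and $T_{n+1}^{gfb}$ have a common maximal pending subtree.
   Context: A rooted binary tree with $n\geq 2$ leaves is a rooted tree whose root has degree 2 and all other internal nodes have degree 3; for $n=1$ it is a single node. Trees are considered up to isomorphism. The maximal pending subtrees of a tree with at least 2 leaves are the two subtrees rooted at the children of the root. The GFB tree $T_n^{gfb}$ is the output of: start with $n$ single-node trees; while more than one tree remains, remove a tree $u$ of minimal size (number of leaves), then remove a tree $v$ of minimal size among the remaining ones, and insert the tree with a new root whose children are the roots of $u$ and $v$; output the remaining tree. *)

(* Defs.v *)
From Stdlib Require Import List Permutation Arith Relations.
Import ListNotations.

Inductive tree : Type :=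
| Leaf : tree
| Node : tree -> tree -> tree.

Fixpoint size (t : tree) : nat :=
  match t with
  | Leaf => 1
  | Node a b => size a + size b
  end.

Inductive iso : tree -> tree -> Prop :=
| iso_leaf : iso Leaf Leaf
| iso_node : forall a b a' b', iso a a' -> iso b b' -> iso (Node a b) (Node a' b')
| iso_swap : forall a b a' b', iso a b' -> iso b a' -> iso (Node a b) (Node a' b').

Definition max_pending (s t : tree) : Prop :=
  match t with
  | Leaf => False
  | Node a b => s = a \/ s = b
  end.

Definition common_max_pending (T1 T2 : tree) : Prop :=
  exists s1 s2, max_pending s1 T1 /\ max_pending s2 T2 /\ iso s1 s2.

(* One step of the GFB process on a multiset (list up to permutation) of trees:
   remove u of minimal size, then v of minimal size among the remaining,
   and insert the tree with a new root whose children are u and v. *)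
Inductive gfb_step : list tree -> list tree -> Prop :=
| gfb_step_intro : forall l u v rest,
    Permutation l (u :: v :: rest) ->
    (forall w, In w (v :: rest) -> size u <= size w) ->
    (forall w, In w rest -> size v <= size w) ->
    gfb_step l (Node u v :: rest).

Definition gfb (n : nat) (T : tree) : Prop :=
  clos_refl_trans (list tree) gfb_step (repeat Leaf n) [T].

(* Main.v *)
Require Import Defs.
From Stdlib Require Import Arith.
From Stdlib Require Import List Permutation Relations Lia.
Import ListNotations.

Fixpoint C (j : nat) : tree :=
  match j with 0 => Leaf | S j => Node (C j) (C j) end.

Lemma pow2S j : 2 ^ S j = 2 * 2 ^ j.
Proof. apply Nat.pow_succ_r'. Qed.

Lemma size_C j : size (C j) = 2 ^ j.
Proof. induction j; simpl C; simpl size; [reflexivity|]. rewrite pow2S, IHj. lia. Qed.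

Lemma pow2_pos j : 1 <= 2 ^ j.
Proof. induction j; [simpl; lia|]. rewrite pow2S; lia. Qed.

Lemma pow_rel m j : (m < j /\ 2*2^m <= 2^j) \/ m = j \/ m = S j \/ (S (S j) <= m /\ 4*2^j <= 2^m).
Proof.
  destruct (lt_eq_lt_dec m j) as [[H|H]|H].
  - left. split; [lia|]. rewrite <- pow2S. apply Nat.pow_le_mono_r; lia.
  - auto.
  - destruct (Nat.eq_dec m (S j)); [auto|]. right; right; right. split; [lia|].
    replace (4 * 2^j) with (2 ^ S (S j)) by (rewrite !pow2S; lia).
    apply Nat.pow_le_mono_r; lia.
Qed.

Lemma iso_refl t : iso t t.
Proof. induction t; constructor; auto. Qed.

Definition tree_eq_dec (x y : tree) : {x = y} + {x <> y}.
Proof. decide equality. Defined.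

Fixpoint sumsize (l : list tree) : nat :=
  match l with [] => 0 | t :: l => size t + sumsize l end.

Lemma sumsize_perm l l' : Permutation l l' -> sumsize l = sumsize l'.
Proof. induction 1; simpl; lia. Qed.

Lemma sumsize_repeat t a : sumsize (repeat t a) = a * size t.
Proof. induction a; simpl; lia. Qed.

Lemma sumsize_app l l' : sumsize (l ++ l') = sumsize l + sumsize l'.
Proof. induction l; simpl; lia. Qed.

Definition ROK j (ro : list tree) : Prop :=
  ro = [] \/ exists R, ro = [R] /\ 2^j < size R < 2 * 2^j.

Definition Shape (l : list tree) : Prop :=
  exists j a b ro, Permutation l (repeat (C j) a ++ repeat (C (S j)) b ++ ro)
    /\ ROK j ro /\ 2 <= length l.

Definition cond (n m : nat) : Prop :=
  2 * 2^m <= n <= 3 * 2^m \/ 3 * 2^m <= 2*n <= 4 * 2^m.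

Definition Final n T : Prop :=
  exists u v, T = Node u v /\ forall m, cond n m -> u = C m \/ v = C m.

Lemma pick u rest x X :
  Permutation (u :: rest) (x :: X) ->
  (forall w, In w rest -> size u <= size w) ->
  (forall w, In w X -> size x < size w \/ w = x) ->
  u = x /\ Permutation rest X.
Proof.
  intros Hp Hu Hx.
  destruct (tree_eq_dec u x) as [->|Hne].
  - split; [reflexivity|]. eapply Permutation_cons_inv; eauto.
  - exfalso.
    assert (Iu : In u (x :: X)) by (eapply Permutation_in; eauto; left; auto).
    assert (Ix : In x (u :: rest)) by (eapply Permutation_in; [apply Permutation_sym; eauto|left; auto]).
    destruct Iu as [E|Iu]; [congruence|].
    destruct Ix as [E|Ix]; [congruence|].
    specialize (Hu _ Ix). destruct (Hx _ Iu); [lia|congruence].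
Qed.

Lemma in_repeat_eq (t w : tree) a : In w (repeat t a) -> w = t.
Proof. intro H; apply repeat_spec in H; auto. Qed.

Lemma perm_len1_nil (rest : list tree) : Permutation rest [] -> rest = [].
Proof. intro H; apply Permutation_nil; apply Permutation_sym; auto. Qed.

Lemma normalize l : Shape l -> exists j a b ro,
  Permutation l (repeat (C j) a ++ repeat (C (S j)) b ++ ro)
    /\ ROK j ro /\ 2 <= length l /\ (1 <= a \/ ro <> []).
Proof.
  intros (j & a & b & ro & Hp & Hr & Hl).
  destruct a as [|a]; [|exists j, (S a), b, ro; repeat split; auto; lia].
  destruct Hr as [->|[R [-> HR]]].
  - exists (S j), b, 0, []. simpl in *. repeat split; auto.
    + left; auto.
    + apply Permutation_length in Hp. rewrite app_nil_r, repeat_length in Hp. lia.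
  - exists j, 0, b, [R]. repeat split; auto. right; exists R; auto. right; discriminate.
Qed.

Lemma step n l l' : Shape l -> sumsize l = n -> gfb_step l l' ->
  Shape l' \/ exists T, l' = [T] /\ Final n T.
Proof.
  intros Hs Hn Hst. apply normalize in Hs.
  destruct Hs as (j & a & b & ro & Hs & Hr & Hl & Hne).
  destruct Hst as [l u v rest Hp Hu Hv].
  assert (Hx := perm_trans (Permutation_sym Hp) Hs).
  assert (Hsum := sumsize_perm _ _ Hp). simpl in Hsum.
  assert (HL := Permutation_length Hs).
  pose proof (size_C j) as SCj. pose proof (size_C (S j)) as SCj1.
  rewrite pow2S in SCj1. pose proof (pow2_pos j).
  destruct a as [|[|a]].
  -
    destruct Hr as [->|[R [-> HR]]]; [destruct Hne as [Hq|Hq]; [lia|congruence]|].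
    destruct b as [|b]; [simpl in HL; lia|].
    cbn [repeat app] in Hx.
    assert (Hx2 : Permutation (u :: v :: rest) (R :: C (S j) :: repeat (C (S j)) b)).
    { eapply perm_trans; [exact Hx|]. apply Permutation_sym, Permutation_cons_append. }
    apply pick in Hx2 as [-> Hx2]; auto.
    2:{ intros w Hw. destruct Hw as [<-|Hw]; [left; lia|]. apply in_repeat_eq in Hw; subst; left; lia. }
    apply pick in Hx2 as [-> Hx2]; auto.
    2:{ intros w Hw. apply in_repeat_eq in Hw; auto. }
    destruct b as [|b].
    + apply perm_len1_nil in Hx2; subst rest. right. eexists; split; [reflexivity|].
      exists R, (C (S j)); split; [reflexivity|]. intros m Hc. unfold cond in Hc.
      simpl sumsize in Hsum. rewrite SCj1 in Hsum.
      destruct (pow_rel m j) as [[H1 H2]|[->|[->|[H1 H2]]]]; try lia.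
      rewrite pow2S in Hc. right; reflexivity.
    + left. exists (S j), (S b), 0, [Node R (C (S j))]. repeat split.
      * simpl. rewrite ?app_nil_r. eapply perm_trans; [apply perm_skip, Hx2|].
        apply Permutation_cons_append.
      * right. eexists; split; [reflexivity|]. simpl size. rewrite !pow2S. lia.
      * apply Permutation_length in Hx2. simpl in *. lia.
  -
    destruct Hr as [->|[R [-> HR]]].
    + destruct b as [|b]; [simpl in HL; lia|]. cbn [repeat app] in Hx. rewrite app_nil_r in Hx.
      apply pick in Hx as [-> Hx]; auto.
      2:{ intros w Hw. destruct Hw as [<-|Hw]; [left; lia|]. apply in_repeat_eq in Hw; subst; left; lia. }
      apply pick in Hx as [-> Hx]; auto.
      2:{ intros w Hw. apply in_repeat_eq in Hw; auto. }
      destruct b as [|b].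
      * apply perm_len1_nil in Hx; subst rest. right. eexists; split; [reflexivity|].
        exists (C j), (C (S j)); split; [reflexivity|]. intros m Hc. unfold cond in Hc.
        simpl sumsize in Hsum. rewrite SCj1, SCj in Hsum.
        destruct (pow_rel m j) as [[H1 H2]|[->|[->|[H1 H2]]]]; try lia.
        -- left; reflexivity.
        -- right; reflexivity.
      * left. exists (S j), (S b), 0, [Node (C j) (C (S j))]. repeat split.
        -- simpl. rewrite ?app_nil_r. eapply perm_trans; [apply perm_skip, Hx|].
           apply Permutation_cons_append.
        -- right. eexists; split; [reflexivity|]. simpl size. rewrite !pow2S.
           rewrite size_C; rewrite ?pow2S; lia.
        -- apply Permutation_length in Hx. simpl in *. lia.
    + cbn [repeat app] in Hx.
      apply pick in Hx as [-> Hx]; auto.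
      2:{ intros w Hw. apply in_app_or in Hw as [Hw|[<-|[]]]; [|left; lia].
          apply in_repeat_eq in Hw; subst; left; lia. }
      assert (Hx2 : Permutation (v :: rest) (R :: repeat (C (S j)) b)).
      { eapply perm_trans; [exact Hx|]. apply Permutation_sym, Permutation_cons_append. }
      apply pick in Hx2 as [-> Hx2]; auto.
      2:{ intros w Hw. apply in_repeat_eq in Hw; subst; left; lia. }
      destruct b as [|b].
      * apply perm_len1_nil in Hx2; subst rest. right. eexists; split; [reflexivity|].
        exists (C j), R; split; [reflexivity|]. intros m Hc. unfold cond in Hc.
        simpl sumsize in Hsum. rewrite SCj in Hsum.
        destruct (pow_rel m j) as [[H1 H2]|[->|[->|[H1 H2]]]]; try lia.
        -- left; reflexivity.
        -- rewrite pow2S in Hc; lia.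
      * left. exists (S j), (S b), 0, [Node (C j) R]. repeat split.
        -- simpl. rewrite ?app_nil_r. eapply perm_trans; [apply perm_skip, Hx2|].
           apply Permutation_cons_append.
        -- right. eexists; split; [reflexivity|]. simpl size. rewrite !pow2S.
           rewrite size_C. lia.
        -- apply Permutation_length in Hx2. simpl in *. lia.
  -
    cbn [repeat app] in Hx.
    assert (Hdom : forall w, In w (repeat (C j) a ++ repeat (C (S j)) b ++ ro) ->
                  size (C j) < size w \/ w = C j).
    { intros w Hw. apply in_app_or in Hw as [Hw|Hw]; [apply in_repeat_eq in Hw; auto|].
      apply in_app_or in Hw as [Hw|Hw]; [apply in_repeat_eq in Hw; subst; left; lia|].
      destruct Hr as [->|[R [-> HR]]]; [destruct Hw|]. destruct Hw as [<-|[]]. left; lia. }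
    apply pick in Hx as [-> Hx]; auto.
    2:{ intros w [<-|Hw]; auto. }
    apply pick in Hx as [-> Hx]; auto.
    destruct (repeat (C j) a ++ repeat (C (S j)) b ++ ro) eqn:E.
    + apply perm_len1_nil in Hx; subst rest. right. eexists; split; [reflexivity|].
      exists (C j), (C j); split; [reflexivity|]. intros m Hc. unfold cond in Hc.
      simpl sumsize in Hsum. rewrite SCj in Hsum.
      destruct (pow_rel m j) as [[H1 H2]|[->|[->|[H1 H2]]]]; try lia.
      -- left; reflexivity.
      -- rewrite pow2S in Hc; lia.
    + rewrite <- E in Hx. left. exists j, a, (S b), ro. repeat split; auto.
      * change (Node (C j) (C j)) with (C (S j)). simpl.
        apply Permutation_cons_app. exact Hx.
      * apply Permutation_length in Hx. rewrite E in Hx. simpl in *. lia.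
Qed.

Definition Inv n l := sumsize l = n /\ (Shape l \/ exists T, l = [T] /\ Final n T).

Lemma inv_step n l l' : Inv n l -> gfb_step l l' -> Inv n l'.
Proof.
  intros [Hn Hs] Hst. split.
  - destruct Hst as [l u v rest Hp _ _]. apply sumsize_perm in Hp. simpl in *. lia.
  - destruct Hs as [Hs|[T [-> _]]].
    + eapply step; eauto.
    + exfalso. inversion Hst as [l0 u v rest Hp]; subst. apply Permutation_length in Hp. simpl in Hp. lia.
Qed.

Lemma gfb_final n T : 2 <= n -> gfb n T -> Final n T.
Proof.
  intros H2 Hg. unfold gfb in Hg. apply clos_rt_rt1n in Hg.
  assert (Hi : Inv n (repeat Leaf n)).
  { split.
    - rewrite sumsize_repeat. simpl. lia.
    - left. exists 0, n, 0, []. simpl. rewrite !app_nil_r. repeat split; auto.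
      + left; auto.
      + rewrite repeat_length; auto. }
  revert Hi Hg. generalize (repeat Leaf n) as l. intros l Hi Hg.
  remember [T] as lT eqn:E. revert E.
  induction Hg as [x|x y z Hxy Hyz IH]; intros E.
  - subst. destruct Hi as [_ [(j & a & b & ro & _ & _ & Hl)|[T' [HT HF]]]].
    + simpl in Hl; lia.
    + injection HT as ->; auto.
  - apply IH; auto. eapply inv_step; eauto.
Qed.

Lemma exists_m n : 3 <= n -> Nat.Odd n ->
  (exists m, cond (n-1) m /\ cond n m) /\ (exists m, cond n m /\ cond (n+1) m).
Proof.
  intros H3 [k Hk].
  destruct (Nat.log2_spec n) as [Hlo Hhi]; [lia|].
  destruct (Nat.log2 n) as [|[|q]] eqn:El.
  - simpl in *; lia.
  - simpl in *. assert (n = 3) by lia. subst. unfold cond; simpl.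
    split; [exists 0|exists 1]; simpl; lia.
  - repeat rewrite pow2S in Hlo; repeat rewrite pow2S in Hhi. pose proof (pow2_pos q).
    unfold cond.
    destruct (Nat.lt_ge_cases n (6 * 2^q)).
    + split; exists (S q); rewrite !pow2S; lia.
    + split; exists (S (S q)); rewrite !pow2S; lia.
Qed.

Theorem lemma9 (n : nat) (T Tm Tp : tree) :
  3 <= n -> Nat.Odd n ->
  gfb n T -> gfb (n - 1) Tm -> gfb (n + 1) Tp ->
  common_max_pending T Tm /\ common_max_pending T Tp.
Proof.
  intros H3 Hodd HT HTm HTp.
  apply gfb_final in HT; [|lia]. apply gfb_final in HTm; [|lia]. apply gfb_final in HTp; [|lia].
  destruct HT as (u & v & -> & HT).
  destruct HTm as (u1 & v1 & -> & HTm).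
  destruct HTp as (u2 & v2 & -> & HTp).
  destruct (exists_m n H3 Hodd) as [[m [Hm1 Hm2]] [m' [Hm3 Hm4]]].
  split.
  - destruct (HT m Hm2) as [E1|E1]; destruct (HTm m Hm1) as [E2|E2];
      [exists u, u1|exists u, v1|exists v, u1|exists v, v1];
      simpl; repeat split; auto; rewrite E1, E2; apply iso_refl.
  - destruct (HT m' Hm3) as [E1|E1]; destruct (HTp m' Hm4) as [E2|E2];
      [exists u, u2|exists u, v2|exists v, u2|exists v, v2];
      simpl; repeat split; auto; rewrite E1, E2; apply iso_refl.
Qed.
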